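(* Assume (AC1) holds and $(\xi_i)_{i=1}^k$ is a family of vector fields as in (AC3). Then for every $u\in\mathcal A$ and every $d\in\mathcal H$ with $d\perp C_u$, $$\sum_{i=1}^k\langle u,\xi_i(u)\rangle\,\xi_i'(u)[d]=d-\sum_{i=1}^k\langle u,\xi_i'(u)[d]\rangle\,\xi_i(u).$$
   Context: $\mathcal H$ is a real Hilbert space with inner product $\langle\cdot,\cdot\rangle$; $\mathcal A\subset\mathcal H$ open; for each $u\in\mathcal A$, $C_u$ is a closed cone; $\operatorname{span}C$ is the smallest closed subspace containing $C$, $\operatorname{int}C$ the interior of $C$ relative to $\operatorname{span}C$; $d\perp C$ means $d\perp\operatorname{span}C$; $\phi:\mathcal A\to\mathcal A$ is a given map. (AC1): for all $u\in\mathcal A$, $u\in C_u$. (AC3): there exist a closed subspace $E\subset\mathcal H$ and $C^1$ maps $\xi_i:\mathcal A\to E^\perp$, $i=1,\dots,k$, such that for all $u\in\mathcal A$ and all $i$: (i) $(\xi_i(u))_{i=1}^k$ is orthonormal; (ii) for all $v\in V_u:=\operatorname{span}\{\xi_1(u),\dots,\xi_k(u)\}$, $\xi_i'(u)[v]\in V_u$; (iii) $\xi_i(v)=\xi_i(u)$ for all $v\in\operatorname{int}C_u\cap\mathcal A$; (iv) $\langle u,\xi_i(u)\rangle\ne0$; (v) there is $r>0$ such that $\xi_i'$ is bounded on $\{u\in\mathcal A:\operatorname{dist}(u,\operatorname{Ran}\phi)<r\}$; and $C_u:=E\oplus\{\sum_i t_i\xi_i(u): t_i\ge0\}$. *)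

(* Defs.v *)
From Stdlib Require Import Reals.
Open Scope R_scope.

Record HilbertSpace := {
  hcar :> Type;
  hzero : hcar;
  hadd : hcar -> hcar -> hcar;
  hopp : hcar -> hcar;
  hscal : R -> hcar -> hcar;
  hinner : hcar -> hcar -> R;
  hadd_assoc : forall x y z, hadd x (hadd y z) = hadd (hadd x y) z;
  hadd_comm : forall x y, hadd x y = hadd y x;
  hadd_zero : forall x, hadd x hzero = x;
  hadd_opp : forall x, hadd x (hopp x) = hzero;
  hscal_one : forall x, hscal 1 x = x;
  hscal_assoc : forall a b x, hscal a (hscal b x) = hscal (a * b) x;
  hscal_distr_l : forall a x y, hscal a (hadd x y) = hadd (hscal a x) (hscal a y);
  hscal_distr_r : forall a b x, hscal (a + b) x = hadd (hscal a x) (hscal b x);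
  hinner_sym : forall x y, hinner x y = hinner y x;
  hinner_add_l : forall x y z, hinner (hadd x y) z = hinner x z + hinner y z;
  hinner_scal_l : forall a x y, hinner (hscal a x) y = a * hinner x y;
  hinner_pos : forall x, 0 <= hinner x x;
  hinner_def : forall x, hinner x x = 0 -> x = hzero;
  hcomplete : forall s : nat -> hcar,
    (forall eps, eps > 0 -> exists N, forall m n, (m >= N)%nat -> (n >= N)%nat ->
        sqrt (hinner (hadd (s m) (hopp (s n))) (hadd (s m) (hopp (s n)))) < eps) ->
    exists l, forall eps, eps > 0 -> exists N, forall n, (n >= N)%nat ->
        sqrt (hinner (hadd (s n) (hopp l)) (hadd (s n) (hopp l))) < eps
}.

Arguments hzero {h}.
Arguments hadd {h}.
Arguments hopp {h}.
Arguments hscal {h}.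
Arguments hinner {h}.

Section Hilb.
Variable H : HilbertSpace.

Definition hsub (x y : H) : H := hadd x (hopp y).
Definition hnorm (x : H) : R := sqrt (hinner x x).

Fixpoint hsum (k : nat) (f : nat -> H) : H :=
  match k with
  | O => hzero
  | S k' => hadd (hsum k' f) (f k')
  end.

Definition is_open (A : H -> Prop) : Prop :=
  forall u, A u -> exists r, r > 0 /\ forall v, hnorm (hsub v u) < r -> A v.

Definition seq_lim (s : nat -> H) (l : H) : Prop :=
  forall eps, eps > 0 -> exists N, forall n, (n >= N)%nat -> hnorm (hsub (s n) l) < eps.

Definition is_closed (S : H -> Prop) : Prop :=
  forall s l, (forall n, S (s n)) -> seq_lim s l -> S l.

Definition is_subspace (S : H -> Prop) : Prop :=
  S hzero /\ (forall x y, S x -> S y -> S (hadd x y)) /\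
  (forall a x, S x -> S (hscal a x)).

Definition is_closed_subspace (S : H -> Prop) : Prop :=
  is_subspace S /\ is_closed S.

Definition span (C : H -> Prop) (x : H) : Prop :=
  forall S, is_closed_subspace S -> (forall y, C y -> S y) -> S x.

Definition rel_int (C : H -> Prop) (x : H) : Prop :=
  C x /\ exists r, r > 0 /\ forall y, span C y -> hnorm (hsub y x) < r -> C y.

Definition perp (d : H) (C : H -> Prop) : Prop :=
  forall y, span C y -> hinner d y = 0.

Definition orth_compl (E : H -> Prop) (x : H) : Prop :=
  forall e, E e -> hinner x e = 0.

Definition is_linear (L : H -> H) : Prop :=
  (forall x y, L (hadd x y) = hadd (L x) (L y)) /\
  (forall a x, L (hscal a x) = hscal a (L x)).

Definition is_bounded_linear (L : H -> H) : Prop :=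
  is_linear L /\ exists M, forall h, hnorm (L h) <= M * hnorm h.

Definition frechet_deriv (f : H -> H) (u : H) (L : H -> H) : Prop :=
  is_bounded_linear L /\
  forall eps, eps > 0 -> exists delta, delta > 0 /\
    forall h, hnorm h < delta ->
      hnorm (hsub (hsub (f (hadd u h)) (f u)) (L h)) <= eps * hnorm h.

Definition is_C1_on (A : H -> Prop) (f : H -> H) (Df : H -> H -> H) : Prop :=
  (forall u, A u -> frechet_deriv f u (Df u)) /\
  (forall u, A u -> forall eps, eps > 0 -> exists delta, delta > 0 /\
     forall v, A v -> hnorm (hsub v u) < delta ->
       forall h, hnorm (hsub (Df v h) (Df u h)) <= eps * hnorm h).

(* V_u := span{ xi_0(u), ..., xi_(k-1)(u) } (finite-dim, hence closed) *)
Definition Vspan (k : nat) (xi : nat -> H -> H) (u : H) (v : H) : Prop :=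
  exists c : nat -> R, v = hsum k (fun j => hscal (c j) (xi j u)).

Definition Ccone (E : H -> Prop) (k : nat) (xi : nat -> H -> H) (u : H) (x : H) : Prop :=
  exists e (t : nat -> R), E e /\ (forall i, (i < k)%nat -> 0 <= t i) /\
    x = hadd e (hsum k (fun i => hscal (t i) (xi i u))).

Definition dist_ran_lt (A : H -> Prop) (phi : H -> H) (u : H) (r : R) : Prop :=
  exists w, A w /\ hnorm (hsub u (phi w)) < r.

Definition AC3 (A : H -> Prop) (phi : H -> H) (E : H -> Prop) (k : nat)
    (xi : nat -> H -> H) (Dxi : nat -> H -> H -> H) : Prop :=
  is_closed_subspace E /\
  (forall i, (i < k)%nat ->
     is_C1_on A (xi i) (Dxi i) /\
     (forall u, A u -> orth_compl E (xi i u))) /\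
  (forall u, A u ->
     (forall i j, (i < k)%nat -> (j < k)%nat ->
        hinner (xi i u) (xi j u) = if Nat.eqb i j then 1 else 0) /\
     (forall i, (i < k)%nat -> forall v, Vspan k xi u v -> Vspan k xi u (Dxi i u v)) /\
     (forall i, (i < k)%nat -> forall v,
        rel_int (Ccone E k xi u) v -> A v -> xi i v = xi i u) /\
     (forall i, (i < k)%nat -> hinner u (xi i u) <> 0)) /\
  (exists r, r > 0 /\ forall i, (i < k)%nat -> exists M, forall u, A u ->
     dist_ran_lt A phi u r -> forall h, hnorm (Dxi i u h) <= M * hnorm h).

Definition AC1 (A : H -> Prop) (C : H -> H -> Prop) : Prop :=
  forall u, A u -> C u u.

End Hilb.

Arguments hsub {H}.
Arguments hnorm {H}.
Arguments hsum {H}.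

(* Main.v *)
Require Import Defs.
From Stdlib Require Import Reals Lra Psatz.
Open Scope R_scope.

Fixpoint rsum (k : nat) (f : nat -> R) : R :=
  match k with O => 0 | S k' => rsum k' f + f k' end.

Lemma rsum_ext k f g : (forall i, (i < k)%nat -> f i = g i) -> rsum k f = rsum k g.
Proof. induction k; simpl; intros; auto. rewrite IHk, H; auto. Qed.

Lemma rsum_plus k f g : rsum k (fun i => f i + g i) = rsum k f + rsum k g.
Proof. induction k; simpl; [lra|]. rewrite IHk; lra. Qed.

Lemma rsum_zero k : rsum k (fun _ => 0) = 0.
Proof. induction k; simpl; [lra|]. rewrite IHk; lra. Qed.

Lemma rsum_kron k g i : (i < k)%nat ->
  rsum k (fun j => (if Nat.eqb j i then 1 else 0) * g j) = g i.
Proof.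
  induction k; intros Hi; [lia|]. simpl.
  destruct (Nat.eq_dec i k) as [->|Hne].
  - rewrite Nat.eqb_refl.
    rewrite (rsum_ext k _ (fun _ => 0)), rsum_zero; [lra|].
    intros j Hj. replace (Nat.eqb j k) with false; [lra|].
    symmetry; apply Nat.eqb_neq; lia.
  - rewrite IHk by lia. replace (Nat.eqb k i) with false; [lra|].
    symmetry; apply Nat.eqb_neq; lia.
Qed.

Lemma dl_mult f g x l1 l2 l : derivable_pt_lim f x l1 -> derivable_pt_lim g x l2 ->
  l = l1 * g x + f x * l2 -> derivable_pt_lim (fun t => f t * g t) x l.
Proof. intros A B ->. exact (derivable_pt_lim_mult f g x l1 l2 A B). Qed.

Lemma dl_plus f g x l1 l2 l : derivable_pt_lim f x l1 -> derivable_pt_lim g x l2 ->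
  l = l1 + l2 -> derivable_pt_lim (fun t => f t + g t) x l.
Proof. intros A B ->. exact (derivable_pt_lim_plus f g x l1 l2 A B). Qed.

Lemma dl_minus f g x l1 l2 l : derivable_pt_lim f x l1 -> derivable_pt_lim g x l2 ->
  l = l1 - l2 -> derivable_pt_lim (fun t => f t - g t) x l.
Proof. intros A B ->. exact (derivable_pt_lim_minus f g x l1 l2 A B). Qed.

Lemma dl_affine a b x : derivable_pt_lim (fun t => a + t * b) x b.
Proof.
  apply (dl_plus (fun _ => a) (fun t => t * b) x 0 b); [apply derivable_pt_lim_const| |lra].
  apply (dl_mult (fun t => t) (fun _ => b) x 1 0); [apply derivable_pt_lim_id|apply derivable_pt_lim_const|lra].
Qed.

Lemma dl_rsum n (F : nat -> R -> R) (l : nat -> R) x :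
  (forall i, (i < n)%nat -> derivable_pt_lim (F i) x (l i)) ->
  derivable_pt_lim (fun t => rsum n (fun i => F i t)) x (rsum n l).
Proof.
  induction n; intros Hd; simpl.
  - apply derivable_pt_lim_const.
  - apply (dl_plus (fun t => rsum n (fun i => F i t)) (F n) x (rsum n l) (l n)); auto.
Qed.

Lemma dl_zero f l : derivable_pt_lim f 0 l ->
  (exists r, r > 0 /\ forall t, Rabs t < r -> f t = 0) -> l = 0.
Proof.
  intros Hd [r [Hr Hz]].
  destruct (Req_dec l 0) as [|Hl]; auto. exfalso.
  assert (He : 0 < Rabs l) by (apply Rabs_pos_lt; auto).
  destruct (Hd _ He) as [del Hdel].
  set (h := Rmin del r / 2).
  assert (Hm : 0 < Rmin del r) by (apply Rmin_pos; [apply cond_pos|lra]).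
  assert (Hh0 : h <> 0) by (unfold h; lra).
  assert (Hha : Rabs h = h) by (apply Rabs_right; unfold h; lra).
  assert (H1 : Rabs h < del) by (rewrite Hha; unfold h; pose proof (Rmin_l del r); lra).
  specialize (Hdel h Hh0 H1).
  rewrite Rplus_0_l, (Hz h), (Hz 0) in Hdel.
  - replace ((0 - 0) / h - l) with (- l) in Hdel by (field; auto).
    rewrite Rabs_Ropp in Hdel. lra.
  - rewrite Rabs_R0; lra.
  - rewrite Hha; unfold h; pose proof (Rmin_r del r); lra.
Qed.

Section Hilb2.
Variable H : HilbertSpace.

Lemma scal0 (x : H) : hscal 0 x = hzero.
Proof.
  pose proof (hscal_distr_r H 0 0 x) as h. rewrite Rplus_0_r in h.
  set (a := hscal 0 x) in *.
  transitivity (hadd (hadd a a) (hopp a)).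
  - rewrite <- hadd_assoc, hadd_opp, hadd_zero; auto.
  - rewrite <- h. apply hadd_opp.
Qed.

Lemma inner0l (y : H) : hinner hzero y = 0.
Proof. rewrite <- (scal0 hzero), hinner_scal_l. lra. Qed.
Lemma inner0r (y : H) : hinner y hzero = 0.
Proof. rewrite hinner_sym; apply inner0l. Qed.
Lemma inner_add_r (x y z : H) : hinner x (hadd y z) = hinner x y + hinner x z.
Proof. rewrite hinner_sym, hinner_add_l, (hinner_sym _ y), (hinner_sym _ z); auto. Qed.
Lemma inner_scal_r a (x y : H) : hinner x (hscal a y) = a * hinner x y.
Proof. rewrite hinner_sym, hinner_scal_l, hinner_sym; auto. Qed.
Lemma inner_opp_l (x y : H) : hinner (hopp x) y = - hinner x y.
Proof. pose proof (hinner_add_l H x (hopp x) y) as h.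
  rewrite hadd_opp, inner0l in h. lra. Qed.
Lemma inner_sub_l (x y z : H) : hinner (hsub x y) z = hinner x z - hinner y z.
Proof. unfold hsub; rewrite hinner_add_l, inner_opp_l; lra. Qed.
Lemma inner_sub_r (x y z : H) : hinner z (hsub x y) = hinner z x - hinner z y.
Proof. rewrite hinner_sym, inner_sub_l, !(hinner_sym _ z); auto. Qed.
Lemma inner_sum_r (z : H) k f : hinner z (hsum k f) = rsum k (fun i => hinner z (f i)).
Proof. induction k; simpl. apply inner0r. rewrite inner_add_r, IHk; auto. Qed.
Lemma inner_sum_l (z : H) k f : hinner (hsum k f) z = rsum k (fun i => hinner (f i) z).
Proof. rewrite hinner_sym, inner_sum_r. apply rsum_ext; intros; apply hinner_sym. Qed.

Lemma sub_zero_eq (X Y : H) : hsub X Y = hzero -> X = Y.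
Proof.
  unfold hsub; intros h.
  rewrite <- (hadd_zero H X), <- (hadd_opp H Y), (hadd_comm H Y), hadd_assoc, h.
  rewrite hadd_comm, hadd_zero; auto.
Qed.

Lemma sub_add_l (u y : H) : hsub (hadd u y) u = y.
Proof.
  unfold hsub. rewrite (hadd_comm H u y), <- hadd_assoc, hadd_opp, hadd_zero; auto.
Qed.

Lemma hnorm_pos (x : H) : 0 <= hnorm x.
Proof. apply sqrt_pos. Qed.

Lemma hnorm_scal t (d : H) : hnorm (hscal t d) = Rabs t * hnorm d.
Proof.
  unfold hnorm. rewrite hinner_scal_l, inner_scal_r, <- Rmult_assoc.
  rewrite sqrt_mult. rewrite <- sqrt_Rsqr_abs. reflexivity.
  apply Rle_0_sqr. apply hinner_pos.
Qed.

Lemma CS (x y : H) : Rabs (hinner x y) <= hnorm x * hnorm y.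
Proof.
  set (a := hinner x x). set (b := hinner y y). set (c := hinner x y).
  assert (Ha : 0 <= a) by apply hinner_pos.
  assert (Hb : 0 <= b) by apply hinner_pos.
  assert (Hc : c * c <= a * b).
  { destruct (Req_dec b 0) as [Hb0|Hb0].
    - apply hinner_def in Hb0. unfold c. rewrite Hb0, inner0r. nra.
    - set (t := - c / b).
      assert (Htb : t * b = - c) by (unfold t; field; auto).
      pose proof (hinner_pos H (hadd x (hscal t y))) as P.
      rewrite hinner_add_l, !inner_add_r, !hinner_scal_l, !inner_scal_r in P.
      rewrite (hinner_sym H y x) in P. fold a b c in P.
      assert (0 < b) by lra. nra. }
  unfold hnorm. fold a b.
  rewrite <- sqrt_mult by auto.
  rewrite <- sqrt_Rsqr_abs. apply sqrt_le_1_alt. unfold Rsqr. lra.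
Qed.

Lemma hsum_scal0 k (f : nat -> H) : hsum k (fun i => hscal 0 (f i)) = hzero.
Proof. induction k; simpl; auto. rewrite IHk, scal0, hadd_zero; auto. Qed.

Lemma vt0 (u d : H) : hadd u (hscal 0 d) = u.
Proof. rewrite scal0, hadd_zero; auto. Qed.

Lemma dl_xi (g : H -> H) (u : H) (L : H -> H) (z d : H) :
  frechet_deriv H g u L ->
  derivable_pt_lim (fun t => hinner z (g (hadd u (hscal t d)))) 0 (hinner z (L d)).
Proof.
  intros [[[Ladd Lscal] _] Hfr] eps He.
  set (N := hnorm z). set (D := hnorm d).
  assert (HN : 0 <= N) by apply hnorm_pos.
  assert (HD : 0 <= D) by apply hnorm_pos.
  set (e' := eps / ((N + 1) * (D + 1))).
  assert (He' : e' > 0) by (unfold e'; apply Rdiv_lt_0_compat; nra).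
  assert (He'2 : e' * ((N + 1) * (D + 1)) = eps) by (unfold e'; field; lra).
  destruct (Hfr e' He') as [del [Hdel Hh]].
  assert (Hpd : 0 < del / (D + 1)) by (apply Rdiv_lt_0_compat; lra).
  exists (mkposreal _ Hpd). intros h Hh0 Hhlt. simpl in Hhlt.
  rewrite Rplus_0_l, vt0.
  assert (Hah : 0 < Rabs h) by (apply Rabs_pos_lt; auto).
  assert (Hlt : Rabs h * (D + 1) < del).
  { apply (Rmult_lt_compat_r (D + 1)) in Hhlt; [|lra].
    unfold Rdiv in Hhlt. rewrite Rmult_assoc, Rinv_l in Hhlt; lra. }
  specialize (Hh (hscal h d)).
  rewrite hnorm_scal in Hh. fold D in Hh.
  assert (Hn : Rabs h * D < del) by nra.
  specialize (Hh Hn).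
  set (Rm := hsub (hsub (g (hadd u (hscal h d))) (g u)) (L (hscal h d))) in Hh.
  assert (Heq : (hinner z (g (hadd u (hscal h d))) - hinner z (g u)) / h - hinner z (L d)
                = hinner z Rm / h).
  { unfold Rm. rewrite !inner_sub_r, Lscal, inner_scal_r. field; auto. }
  rewrite Heq. unfold Rdiv. rewrite Rabs_mult, Rabs_inv.
  pose proof (CS z Rm) as Hcs. fold N in Hcs.
  assert (HRm : 0 <= hnorm Rm) by apply hnorm_pos.
  assert (Hb : Rabs (hinner z Rm) < eps * Rabs h).
  { assert (N * hnorm Rm <= N * (e' * (Rabs h * D))) by (apply Rmult_le_compat_l; auto).
    assert (N * D < (N + 1) * (D + 1)) by nra.
    assert (N * D * e' < eps) by nra.
    nra. }
  apply (Rmult_lt_reg_r (Rabs h)); auto.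
  rewrite Rmult_assoc, Rinv_l by lra. lra.
Qed.

End Hilb2.

Theorem mainTheorem3 (H : HilbertSpace) (A : H -> Prop) (phi : H -> H)
  (E : H -> Prop) (k : nat) (xi : nat -> H -> H) (Dxi : nat -> H -> H -> H) :
  is_open H A ->
  (forall u, A u -> A (phi u)) ->
  AC3 H A phi E k xi Dxi ->
  AC1 H A (Ccone H E k xi) ->
  forall u d, A u -> perp H d (Ccone H E k xi u) ->
    hsum k (fun i => hscal (hinner u (xi i u)) (Dxi i u d))
    = hsub d (hsum k (fun i => hscal (hinner u (Dxi i u d)) (xi i u))).
Proof.
  intros Hopen Hphi [HEsub [Hxi [Hu Hr]]] HAC1 u d HuA Hperp.
  destruct HEsub as [[HE0 _] _].
  destruct (Hu u HuA) as [Horth _].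
  assert (Hspan : forall y, Ccone H E k xi u y -> hinner d y = 0).
  { intros y Hy. apply Hperp. intros S _ HS. apply HS; auto. }
  assert (HdE : forall e, E e -> hinner d e = 0).
  { intros e He. pose proof (Hspan (hadd e (hsum k (fun i => hscal 0 (xi i u))))) as P.
    rewrite inner_add_r, inner_sum_r in P.
    rewrite (rsum_ext k _ (fun _ => 0)), rsum_zero in P.
    - assert (Q : hinner d e + 0 = 0) by (apply P; exists e, (fun _ => 0); split; [auto|split; [intros; lra|rewrite hsum_scal0, hadd_zero; auto]]). lra.
    - intros; rewrite inner_scal_r; lra. }
  assert (Hdxi : forall i, (i < k)%nat -> hinner d (xi i u) = 0).
  { intros i Hi.
    pose proof (Hspan (hadd hzero (hsum k (fun j => hscal (if Nat.eqb j i then 1 else 0) (xi j u))))) as P.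
    rewrite inner_add_r, inner0r, inner_sum_r in P.
    rewrite (rsum_ext k _ (fun j => (if Nat.eqb j i then 1 else 0) * hinner d (xi j u))) in P.
    - rewrite rsum_kron in P by auto. 
      assert (Q : 0 + hinner d (xi i u) = 0); [|lra].
      apply P. exists hzero, (fun j => if Nat.eqb j i then 1 else 0). repeat split; auto.
      intros j _; destruct (Nat.eqb j i); lra.
    - intros; apply inner_scal_r. }
  assert (Hfr : forall i, (i < k)%nat -> frechet_deriv H (xi i) u (Dxi i u)).
  { intros i Hi. destruct (Hxi i Hi) as [[Hc _] _]. apply Hc; auto. }
  assert (Hnear : exists r, r > 0 /\ forall t, Rabs t < r -> A (hadd u (hscal t d))).
  { destruct (Hopen u HuA) as [r0 [Hr0 HA]].
    pose proof (hnorm_pos H d) as HD.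
    exists (r0 / (hnorm d + 1)). split. apply Rdiv_lt_0_compat; lra.
    intros t Ht. apply HA. rewrite sub_add_l, hnorm_scal.
    apply (Rmult_lt_compat_r (hnorm d + 1)) in Ht; [|lra].
    unfold Rdiv in Ht. rewrite Rmult_assoc, Rinv_l in Ht by lra.
    pose proof (Rabs_pos t). nra. }
  destruct Hnear as [r [Hr0 Hnear]].
  assert (HLE : forall i, (i < k)%nat -> forall e, E e -> hinner (Dxi i u d) e = 0).
  { intros i Hi e He. rewrite hinner_sym.
    apply (dl_zero (fun t => hinner e (xi i (hadd u (hscal t d))))).
    - apply dl_xi; auto.
    - exists r; split; auto. intros t Ht.
      destruct (Hxi i Hi) as [_ Ho]. rewrite hinner_sym. apply Ho; auto. }
  set (X := hsum k (fun i => hscal (hinner u (xi i u)) (Dxi i u d))).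
  set (Y := hsum k (fun i => hscal (hinner u (Dxi i u d)) (xi i u))).
  set (w := hsub X (hsub d Y)).
  assert (HwE : forall e, E e -> hinner w e = 0).
  { intros e He. unfold w, X, Y. rewrite !inner_sub_l, !inner_sum_l, HdE by auto.
    rewrite (rsum_ext k _ (fun _ => 0)), rsum_zero.
    rewrite (rsum_ext k _ (fun _ => 0)), rsum_zero. lra.
    - intros i Hi. rewrite hinner_scal_l. destruct (Hxi i Hi) as [_ Ho].
      rewrite Ho; auto. lra.
    - intros i Hi. rewrite hinner_scal_l, HLE; auto. lra. }
  set (V := fun t => hadd u (hscal t d)).
  set (G := fun t => (hinner w u + t * hinner w d) -
      rsum k (fun i => (hinner u (xi i (V t)) + t * hinner d (xi i (V t))) * hinner w (xi i (V t)))).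
  set (l := hinner w d - rsum k (fun i => hinner u (Dxi i u d) * hinner w (xi i u)
                                   + hinner u (xi i u) * hinner w (Dxi i u d))).
  assert (HG : derivable_pt_lim G 0 l).
  { unfold G, l. apply dl_minus with (l1 := hinner w d)
      (l2 := rsum k (fun i => hinner u (Dxi i u d) * hinner w (xi i u)
                                   + hinner u (xi i u) * hinner w (Dxi i u d))).
    - apply dl_affine.
    - apply (dl_rsum k (fun i t => (hinner u (xi i (V t)) + t * hinner d (xi i (V t))) * hinner w (xi i (V t)))).
      intros i Hi.
      apply dl_mult with (l1 := hinner u (Dxi i u d)) (l2 := hinner w (Dxi i u d)).
      + apply dl_plus with (l1 := hinner u (Dxi i u d)) (l2 := 0).
        * apply dl_xi; auto.
        * apply dl_mult with (l1 := 1) (l2 := hinner d (Dxi i u d)).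
          apply derivable_pt_lim_id. apply dl_xi; auto.
          unfold V; rewrite vt0, Hdxi; auto. lra.
        * lra.
      + apply dl_xi; auto.
      + unfold V; rewrite vt0, Hdxi; auto. lra.
    - reflexivity. }
  assert (Hl : l = 0).
  { apply (dl_zero G l HG). exists r; split; auto. intros t Ht.
    specialize (Hnear t Ht). fold (V t) in Hnear.
    destruct (HAC1 _ Hnear) as [e [s [He [_ Hv]]]].
    destruct (Hu _ Hnear) as [Horth' _].
    unfold G.
    assert (Hw1 : hinner w u + t * hinner w d = hinner w (V t)).
    { unfold V. rewrite inner_add_r, inner_scal_r; auto. }
    rewrite Hw1.
    rewrite (rsum_ext k _ (fun i => s i * hinner w (xi i (V t)))).
    - rewrite Hv at 1. rewrite inner_add_r, HwE, inner_sum_r by auto.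
      rewrite (rsum_ext k _ (fun i => s i * hinner w (xi i (V t)))). lra.
      intros; apply inner_scal_r.
    - intros i Hi. f_equal.
      replace (hinner u (xi i (V t)) + t * hinner d (xi i (V t))) with (hinner (V t) (xi i (V t))).
      2: { unfold V at 1. rewrite hinner_add_l, hinner_scal_l; auto. }
      rewrite Hv at 1. rewrite hinner_add_l, inner_sum_l.
      destruct (Hxi i Hi) as [_ Ho]. rewrite (hinner_sym _ e), Ho; auto.
      rewrite (rsum_ext k _ (fun j => (if Nat.eqb j i then 1 else 0) * s j)).
      + rewrite rsum_kron; auto. lra.
      + intros j Hj. rewrite hinner_scal_l, Horth'; auto. lra. }
  assert (Hww : hinner w w = 0).
  { assert (E1 : hinner w w = - l).
    { unfold l. transitivity (hinner w X - (hinner w d - hinner w Y)).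
      { unfold w at 2. rewrite !inner_sub_r; auto. }
      unfold X, Y. rewrite !inner_sum_r.
      rewrite (rsum_ext k (fun i => hinner w (hscal (hinner u (xi i u)) (Dxi i u d)))
                 (fun i => hinner u (xi i u) * hinner w (Dxi i u d))).
      rewrite (rsum_ext k (fun i => hinner w (hscal (hinner u (Dxi i u d)) (xi i u)))
                 (fun i => hinner u (Dxi i u d) * hinner w (xi i u))).
      rewrite rsum_plus. lra.
      intros; apply inner_scal_r. intros; apply inner_scal_r. }
    lra. }
  apply hinner_def in Hww. apply sub_zero_eq. exact Hww.
Qed.
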